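(* Let $n\ge 2$ be an integer and $A\subseteq L_n$. The subspace $(L_n,\tau(A)|_{L_n})$ of $(X_n,\tau(A))$ is $\sigma$-compact if and only if $A$ is an $F_\sigma$-set in $(L_n,\tau_E|_{L_n})$ and $|L_n\setminus A|\le\aleph_0$.
   Context: For $\overline{x},\overline{a}\in\mathbb R^n$ let $|\overline{x}-\overline{a}|$ be the Euclidean distance and $B(\overline{a},\epsilon)=\{\overline{x}\in\mathbb R^n:|\overline{x}-\overline{a}|<\epsilon\}$. Let $P_n=\{\overline{x}\in\mathbb R^n: x_n>0\}$, $L_n=\{\overline{x}\in\mathbb R^n: x_n=0\}$, $X_n=P_n\cup L_n$, and let $\tau_E$ denote the Euclidean topology on $X_n$. For $\overline{a}\in L_n$ and $\epsilon>0$ put $\overline{a(\epsilon)}=(a_1,\dots,a_{n-1},\epsilon)$ and $\tilde B(\overline{a},\epsilon)=\{\overline{a}\}\cup B(\overline{a(\epsilon)},\epsilon)$. For $A\subseteq L_n$, the topology $\tau(A)$ on $X_n$ is generated by the local bases: at $\overline{a}\in P_n$, the sets $B(\overline{a},\epsilon)$ with $0<\epsilon<a_n$; at $\overline{a}\in A$, the sets $B(\overline{a},\epsilon)\cap X_n$ with $\epsilon>0$; at $\overline{a}\in L_n\setminus A$, the sets $\tilde B(\overline{a},\epsilon)$ with $\epsilon>0$. *)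

(* Defs.v *)
From Stdlib Require Import Reals.
From mathcomp Require Import all_boot.
Open Scope R_scope.

(* A point of R^n is represented as (first n-1 coordinates, last coordinate x_n). *)
Definition pt (n : nat) : Type := ('I_(n.-1) -> R) * R.

Definition edist {n : nat} (x y : pt n) : R :=
  sqrt (\big[Rplus/0]_(i < n.-1) Rsqr (x.1 i - y.1 i) + Rsqr (x.2 - y.2)).

Definition Ball {n : nat} (a : pt n) (e : R) : pt n -> Prop :=
  fun x => edist x a < e.

Definition Pn {n : nat} : pt n -> Prop := fun x => 0 < x.2.
Definition Ln {n : nat} : pt n -> Prop := fun x => x.2 = 0.
Definition Xn {n : nat} : pt n -> Prop := fun x => Pn x \/ Ln x.

Definition lift_eps {n : nat} (a : pt n) (e : R) : pt n := (a.1, e).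

Definition tBall {n : nat} (a : pt n) (e : R) : pt n -> Prop :=
  fun x => x = a \/ Ball (lift_eps a e) e x.

Definition basic_nbhd {n : nat} (A : pt n -> Prop) (a : pt n) (U : pt n -> Prop) : Prop :=
  (Pn a /\ exists e, 0 < e < a.2 /\ (forall x, U x <-> Ball a e x))
  \/ (A a /\ exists e, 0 < e /\ (forall x, U x <-> (Ball a e x /\ Xn x)))
  \/ (Ln a /\ ~ A a /\ exists e, 0 < e /\ (forall x, U x <-> tBall a e x)).

Definition tau_open {n : nat} (A : pt n -> Prop) (U : pt n -> Prop) : Prop :=
  (forall x, U x -> Xn x) /\
  (forall x, U x -> exists V, basic_nbhd A x V /\ (forall y, V y -> U y)).

Definition tauL_open {n : nat} (A : pt n -> Prop) (V : pt n -> Prop) : Prop :=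
  exists U, tau_open A U /\ (forall x, V x <-> (U x /\ Ln x)).

Definition tauL_compact {n : nat} (A : pt n -> Prop) (K : pt n -> Prop) : Prop :=
  (forall x, K x -> Ln x) /\
  forall (I : Type) (F : I -> pt n -> Prop),
    (forall i, tauL_open A (F i)) ->
    (forall x, K x -> exists i, F i x) ->
    exists s : list I, forall x, K x -> exists i, List.In i s /\ F i x.

Definition tauL_sigma_compact {n : nat} (A : pt n -> Prop) : Prop :=
  exists K : nat -> pt n -> Prop,
    (forall k, tauL_compact A (K k)) /\
    (forall x, Ln x <-> exists k, K k x).

Definition euclL_closed {n : nat} (C : pt n -> Prop) : Prop :=
  (forall x, C x -> Ln x) /\
  (forall x, Ln x -> ~ C x ->
     exists e, 0 < e /\ forall y, Ln y -> Ball x e y -> ~ C y).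

Definition euclL_Fsigma {n : nat} (A : pt n -> Prop) : Prop :=
  exists C : nat -> pt n -> Prop,
    (forall k, euclL_closed (C k)) /\
    (forall x, A x <-> exists k, C k x).

Definition countable_set {T : Type} (S : T -> Prop) : Prop :=
  exists f : nat -> option T, forall x, S x -> exists k, f k = Some x.

(* Main.v *)
From HB Require Import structures.
Require Import Defs.
From Stdlib Require Import Reals Lra Lia List Classical FunctionalExtensionality.
From mathcomp Require Import all_boot.
From mathcomp Require all_order all_algebra all_classical all_reals all_analysis Rstruct Rstruct_topology.

Module HBmod.
Import all_order all_algebra all_classical all_reals all_analysis Rstruct Rstruct_topology.
HB.instance Definition _ (m : nat) := isPointed.Build {ptws 'I_m -> R} (fun _ => 0%R).

Section HBsec.
Import Order.TTheory GRing.Theory Num.Theory.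
Local Open Scope classical_set_scope.
Local Open Scope ring_scope.

Definition box (m : nat) (v : 'I_m -> R) (d : R) : set {ptws 'I_m -> R} :=
  [set u | forall j, `|u j - v j| < d].

Lemma open_box m v d : open (box m v d).
Proof.
rewrite openE => u ub; rewrite /interior.
have H : forall j, \forall w \near u, `|w j - v j| < d.
  move=> j.
  have ujv := ub j.
  have e0 : 0 < d - `|u j - v j| by rewrite subr_gt0.
  have h2 : nbhs u [set w : {ptws 'I_m -> R} | ball (u j) (d - `|u j - v j|) (w j)].
    exact: (@proj_continuous 'I_m (fun _ => R) j u (ball (u j) (d - `|u j - v j|)) (nbhsx_ballx _ _ e0)).
  apply: filterS h2 => w /=.
  rewrite /ball /= => h.
  have := ler_distD (u j) (w j) (v j).
  rewrite (distrC (w j) (u j)) => h2.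
  apply: (le_lt_trans h2); by rewrite -ltrBrDr.
exact: (@filter_forall _ _ _ (nbhs u) _ H).
Qed.

Lemma cube_compact m (N : R) :
  compact [set f : {ptws 'I_m -> R} | forall j, [set` `[-N, N]] (f j)].
Proof. exact: (@tychonoff 'I_m (fun _ => R) (fun _ => [set` `[-N, N]]) (fun _ => @segment_compact _ _ _)). Qed.

Lemma seq_pick (T : eqType) (I : Type) (P : T -> Prop) (Q : T -> I -> Prop) (l : seq T) :
  (forall v, v \in l -> P v -> exists i, Q v i) ->
  exists s : list I, forall v, v \in l -> P v -> exists i, List.In i s /\ Q v i.
Proof.
elim: l => [|a l IH] H; first by exists nil => v; rewrite in_nil.
have [s Hs] : exists s : list I, forall v, v \in l -> P v -> exists i, List.In i s /\ Q v i.
  by apply: IH => v vl; apply: H; rewrite in_cons vl orbT.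
case: (pselect (P a)) => Pa.
  have [i Qi] := H a (mem_head _ _) Pa.
  exists (i :: s) => v; rewrite in_cons => /orP [/eqP -> _|vl Pv].
    by exists i; split => //; left.
  by have [k [ks Qk]] := Hs v vl Pv; exists k; split => //; right.
exists s => v; rewrite in_cons => /orP [/eqP -> //|]; exact: Hs.
Qed.

Lemma HB (m : nat) (N : R) (S : ('I_m -> R) -> Prop) (I : Type)
  (G : I -> ('I_m -> R) -> Prop) :
  (forall v, S v -> forall j, (Rabs (v j) <= N)%coqR) ->
  (forall v, ~ S v -> exists d, (0 < d)%coqR /\ forall u,
      (forall j, (Rabs (u j - v j) < d)%coqR) -> ~ S u) ->
  (forall v, S v -> exists i d, (0 < d)%coqR /\ forall u,
      (forall j, (Rabs (u j - v j) < d)%coqR) -> G i u) ->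
  exists s : list I, forall v, S v -> exists i, List.In i s /\ G i v.
Proof.
move=> Sb Sc Sg.
have H : forall v : {ptws 'I_m -> R}, exists d, 0 < d /\
    (S v -> exists i, box m v d `<=` G i) /\ (~ S v -> box m v d `<=` ~` S).
  move=> v; case: (pselect (S v)) => Sv.
    have [i [d [d0 hd]]] := Sg v Sv.
    exists d; split; first exact/RltP.
    split => // _; exists i => u ub; apply: hd => j; rewrite RabsE; apply/RltP; exact: ub.
  have [d [d0 hd]] := Sc v Sv.
  exists d; split; first exact/RltP.
  split => // _ u ub; apply: hd => j; rewrite RabsE; apply/RltP; exact: ub.
pose d v := projT1 (cid (H v)).
have dP v : 0 < d v /\ (S v -> exists i, box m v (d v) `<=` G i) /\
    (~ S v -> box m v (d v) `<=` ~` S) := projT2 (cid (H v)).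
have C := cube_compact m N.
rewrite compact_cover in C.
have := C _ setT (fun v => box m v (d v)).
case.
- by move=> v _; exact: open_box.
- move=> v _; exists v => //; rewrite /box /= => j; rewrite subrr normr0; exact: (dP v).1.
move=> D' _ Dcov.
have [s Hs] := @seq_pick _ I S (fun v i => box m v (d v) `<=` G i) (finmap.enum_fset D') (fun v _ Sv => ((dP v).2.1 Sv)).
exists s => v Sv.
have /Dcov [w wD wb] : [set f : {ptws 'I_m -> R} | forall j, [set` `[-N, N]] (f j)] v.
  move=> j; have := Sb v Sv j; rewrite RabsE => /RleP.
  by move=> h; rewrite /= in_itv /= -ler_norml.
case: (pselect (S w)) => Sw.
  have [i [si Gi]] := Hs w wD Sw.
  by exists i; split => //; apply: Gi.
by exfalso; exact: ((dP w).2.2 Sw v wb Sv).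
Qed.

End HBsec.
End HBmod.

Open Scope R_scope.

Section Geo.
Variable n : nat.
Implicit Types x y z : pt n.

Lemma sum_nonneg (I : Type) (r : seq I) (F : I -> R) :
  (forall i, 0 <= F i) -> 0 <= \big[Rplus/0]_(i <- r) F i.
Proof.
move=> H; elim: r => [|a r IH]; first by rewrite big_nil; lra.
by rewrite big_cons; have := H a; lra.
Qed.

Lemma sum_zero (I : Type) (r : seq I) (F : I -> R) :
  (forall i, F i = 0) -> \big[Rplus/0]_(i <- r) F i = 0.
Proof.
move=> H; elim: r => [|a r IH]; first by rewrite big_nil.
by rewrite big_cons IH H; lra.
Qed.

Lemma sum_le (I : Type) (r : seq I) (F G : I -> R) :
  (forall i, F i <= G i) -> \big[Rplus/0]_(i <- r) F i <= \big[Rplus/0]_(i <- r) G i.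
Proof.
move=> H; elim: r => [|a r IH]; first by rewrite !big_nil; lra.
by rewrite !big_cons; have := H a; lra.
Qed.

Lemma sum_term (I : eqType) (r : seq I) (F : I -> R) i :
  (forall i, 0 <= F i) -> i \in r -> F i <= \big[Rplus/0]_(j <- r) F j.
Proof.
move=> H; elim: r => [|a r IH]; first by rewrite in_nil.
rewrite in_cons big_cons => /orP [/eqP ->|ir].
  by have := sum_nonneg _ r F H; lra.
by have := IH ir; have := H a; lra.
Qed.

Lemma sum_const_ord k (c : R) : \big[Rplus/0]_(i < k) c = INR k * c.
Proof.
rewrite big_const_ord; elim: k => [|k IH] /=; first by lra.
rewrite IH; case: k IH => [|k] _ /=; lra.
Qed.

Lemma sumsq_ge0 x y : 0 <= \big[Rplus/0]_(i < n.-1) Rsqr (x.1 i - y.1 i).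
Proof. apply: sum_nonneg => i; exact: Rle_0_sqr. Qed.

Lemma edist_ge0 x y : 0 <= edist x y.
Proof. exact: sqrt_pos. Qed.

Lemma edist_sym x y : edist x y = edist y x.
Proof.
rewrite /edist; congr sqrt; congr Rplus; last exact: Rsqr_neg_minus.
by apply: eq_bigr => i _; exact: Rsqr_neg_minus.
Qed.

Lemma edist_refl x : edist x x = 0.
Proof.
rewrite /edist sum_zero; last by move=> i; rewrite Rminus_diag; exact: Rsqr_0.
by rewrite Rminus_diag Rsqr_0 Rplus_0_r sqrt_0.
Qed.

Lemma edist_last x y : Rabs (x.2 - y.2) <= edist x y.
Proof.
rewrite -sqrt_Rsqr_abs /edist; apply: sqrt_le_1_alt.
by have := sumsq_ge0 x y; lra.
Qed.

Lemma edist_coord x y j : Rabs (x.1 j - y.1 j) <= edist x y.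
Proof.
rewrite -sqrt_Rsqr_abs /edist; apply: sqrt_le_1_alt.
have := Rle_0_sqr (x.2 - y.2).
have := @sum_term _ (index_enum 'I_(n.-1)) (fun i => Rsqr (x.1 i - y.1 i)) j
  (fun i => Rle_0_sqr _) (mem_index_enum j).
move=> h1 h2; apply: (Rle_trans _ _ _ h1).
have hh : forall a b, 0 <= b -> a <= a + b by move=> *; lra.
exact: hh.
Qed.

Lemma mink_step a b X Y Z : 0 <= X -> 0 <= Y -> 0 <= Z ->
  sqrt X <= sqrt Y + sqrt Z ->
  sqrt (Rsqr (a + b) + X) <= sqrt (Rsqr a + Y) + sqrt (Rsqr b + Z).
Proof.
move=> X0 Y0 Z0 H.
have eX := sqrt_sqrt X X0; have eY := sqrt_sqrt Y Y0; have eZ := sqrt_sqrt Z Z0.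
have hX := sqrt_pos X; have hY := sqrt_pos Y; have hZ := sqrt_pos Z.
have P0 : 0 <= Rsqr a + Y by have := Rle_0_sqr a; lra.
have Q0 : 0 <= Rsqr b + Z by have := Rle_0_sqr b; lra.
have eP := sqrt_sqrt _ P0; have eQ := sqrt_sqrt _ Q0.
have hP := sqrt_pos (Rsqr a + Y); have hQ := sqrt_pos (Rsqr b + Z).
set P := sqrt (Rsqr a + Y) in eP hP *; set Q := sqrt (Rsqr b + Z) in eQ hQ *.
set A := sqrt Y in eY hY H; set B := sqrt Z in eZ hZ H; set sX := sqrt X in eX hX H.
rewrite -(sqrt_Rsqr (P + Q)); last lra.
apply: sqrt_le_1_alt.
have hPQ : a * b + A * B <= P * Q.
  have hsq : (a * b + A * B) * (a * b + A * B) <= (P * Q) * (P * Q).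
    have -> : (P * Q) * (P * Q) = (P * P) * (Q * Q) by ring.
    rewrite eP eQ /Rsqr -eY -eZ.
    have := Rle_0_sqr (a * B - A * b); rewrite /Rsqr; nra.
  have hPQ0 : 0 <= P * Q by nra.
  nra.
rewrite /Rsqr -eX; rewrite /Rsqr in eP eQ.
nra.
Qed.

Lemma edist_tri x y z : edist x z <= edist x y + edist y z.
Proof.
rewrite /edist.
set S1 := \big[Rplus/0]_(i < n.-1) Rsqr (x.1 i - z.1 i).
set S2 := \big[Rplus/0]_(i < n.-1) Rsqr (x.1 i - y.1 i).
set S3 := \big[Rplus/0]_(i < n.-1) Rsqr (y.1 i - z.1 i).
have K : 0 <= S1 /\ 0 <= S2 /\ 0 <= S3 /\ sqrt S1 <= sqrt S2 + sqrt S3.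
  rewrite /S1 /S2 /S3.
  apply: (big_rec3 (fun X Y Z => 0 <= X /\ 0 <= Y /\ 0 <= Z /\ sqrt X <= sqrt Y + sqrt Z)).
    by rewrite sqrt_0; lra.
  move=> i X Y Z _ [X0 [Y0 [Z0 H]]].
  have e : x.1 i - z.1 i = (x.1 i - y.1 i) + (y.1 i - z.1 i) by ring.
  rewrite e; split; first by have := Rle_0_sqr ((x.1 i - y.1 i) + (y.1 i - z.1 i)); lra.
  split; first by have := Rle_0_sqr (x.1 i - y.1 i); lra.
  split; first by have := Rle_0_sqr (y.1 i - z.1 i); lra.
  exact: mink_step.
case: K => [X0 [Y0 [Z0 H]]].
have e : x.2 - z.2 = (x.2 - y.2) + (y.2 - z.2) by ring.
rewrite e (Rplus_comm S1) (Rplus_comm S2) (Rplus_comm S3).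
exact: mink_step.
Qed.

Lemma abs0 d : Rabs d <= 0 -> d = 0.
Proof. move=> h; have := Rle_abs d; have := Rle_abs (-d); rewrite Rabs_Ropp; lra. Qed.

Lemma edist_pos x y : x <> y -> 0 < edist x y.
Proof.
move=> nxy; case: (edist_ge0 x y) => // e0; exfalso; apply: nxy.
have h1 : forall j, x.1 j = y.1 j.
  move=> j; have := edist_coord x y j; rewrite -e0 => /abs0; lra.
have h2 : x.2 = y.2.
  have := edist_last x y; rewrite -e0 => /abs0; lra.
clear e0; case: x y h1 h2 => [x1 x2] [y1 y2] /= h1 ->.
by congr pair; apply: functional_extensionality.
Qed.

End Geo.
Arguments sumsq_ge0 {n}. Arguments edist_ge0 {n}. Arguments edist_sym {n}.
Arguments edist_refl {n}. Arguments edist_last {n}. Arguments edist_coord {n}.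
Arguments edist_tri {n}. Arguments edist_pos {n}.

Section Top.
Variable n : nat.
Implicit Types x y z : pt n.

Lemma box_ball e : 0 < e -> exists d, 0 < d /\ forall x y : pt n, x.2 = y.2 ->
  (forall j, Rabs (x.1 j - y.1 j) < d) -> edist x y < e.
Proof.
move=> e0.
have k0 := pos_INR (n.-1).
set k := INR (n.-1) in k0.
exists (e / (k + 1)); split.
  apply: Rdiv_lt_0_compat; lra.
set d := e / (k + 1).
have ed : e = d * (k + 1) by rewrite /d; field; lra.
have d0 : 0 < d by rewrite /d; apply: Rdiv_lt_0_compat; lra.
move=> x y e2 hb.
rewrite /edist e2 Rminus_diag Rsqr_0 Rplus_0_r.
have hS : \big[Rplus/0]_(i < n.-1) Rsqr (x.1 i - y.1 i) <= k * Rsqr d.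
  rewrite /k -sum_const_ord; apply: sum_le => i.
  have := hb i; move: (x.1 i - y.1 i) => t ht.
  have := Rle_abs t; have := Rle_abs (-t); rewrite Rabs_Ropp /Rsqr; nra.
rewrite -(sqrt_Rsqr e); last lra.
apply: sqrt_lt_1_alt; split; first exact: (sumsq_ge0 x y).
apply: (Rle_lt_trans _ _ _ hS).
rewrite ed /Rsqr; nra.
Qed.

Lemma tauL_open_of (A : pt n -> Prop) (V : pt n -> Prop) :
  (forall x, V x -> Ln x) ->
  (forall z, V z -> A z -> exists e, 0 < e /\ forall y, Ln y -> Ball z e y -> V y) ->
  tauL_open A V.
Proof.
move=> VL VA.
exists (fun w => V w \/ Pn w); split; last first.
  move=> x; split; first by move=> Vx; split; [left | exact: VL].
  case=> [[//|Px] Lx]; rewrite /Pn /Ln in Px Lx; lra.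
split.
  by move=> x [Vx|Px]; [right; exact: VL | left].
move=> x [Vx|Px].
  have Lx := VL x Vx.
  case: (classic (A x)) => Ax.
    have [e [e0 he]] := VA x Vx Ax.
    exists (fun y => Ball x e y /\ Xn y); split.
      by right; left; split => //; exists e; split.
    move=> y [By [Py|Ly]]; [right | left] => //; exact: he.
  exists (tBall x 1); split.
    by right; right; split => //; split => //; exists 1; split => //; lra.
  move=> y [->|By]; first by left.
  right; rewrite /Pn; have := edist_last y (lift_eps x 1).
  rewrite /Ball in By; simpl in *.
  move=> h; have := Rle_abs (y.2 - 1); have := Rle_abs (-(y.2 - 1)); rewrite Rabs_Ropp; lra.
exists (Ball x (x.2 / 2)); split.
  left; split => //; exists (x.2 / 2); rewrite /Pn in Px; split; first lra.
  by [].
move=> y By; right; rewrite /Pn in Px *; have := edist_last y x.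
rewrite /Ball in By.
move=> h; have := Rle_abs (y.2 - x.2); have := Rle_abs (-(y.2 - x.2)); rewrite Rabs_Ropp; lra.
Qed.

Lemma open_nbhdA (A : pt n -> Prop) V z : tauL_open A V -> V z -> A z ->
  exists e, 0 < e /\ forall y, Ln y -> Ball z e y -> V y.
Proof.
move=> [U [[UX Ub] hV]] Vz Az.
have [Uz Lz] := (hV z).1 Vz.
have [W [hW WU]] := Ub z Uz.
case: hW => [[Pz _]|[[_ [e [e0 he]]]|[_ [nAz _]]]]; last by [].
  by rewrite /Pn /Ln in Pz Lz; lra.
exists e; split => // y Ly By; apply/(hV y); split => //; apply: WU; apply/he.
by split => //; right.
Qed.

End Top.

Lemma list_min (T : Type) (s : list T) (d : T -> R) :
  exists e, 0 < e /\ forall y, In y s -> 0 < d y -> e <= d y.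
Proof.
elim: s => [|a s [e [e0 he]]]; first by exists 1; split => //; lra.
case: (Rlt_le_dec 0 (d a)) => da.
  exists (Rmin e (d a)); split; first by apply: Rmin_pos.
  move=> y [<-|ys] dy; first exact: Rmin_r.
  apply: Rle_trans (Rmin_l _ _) (he y ys dy).
exists e; split => // y [<-|ys] dy; [lra | exact: he].
Qed.

Section Dir1.
Variable n : nat.
Variable A : pt n -> Prop.
Hypothesis hA : forall x, A x -> Ln x.

Lemma cover_set_open (Q : Prop) (y : pt n) (r : R) :
  tauL_open A (fun z => (z = y /\ ~ A y /\ Ln y) \/ (Q /\ A y /\ Ln z /\ edist z y < r)).
Proof.
apply: tauL_open_of.
  by move=> x [[-> [_ Ly]]|[_ [_ [Lx _]]]].
move=> z [[-> [nAy _]]|[Qy [Ay [Lz hz]]]] Az; first by [].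
exists (r - edist z y); split; first lra.
move=> w Lw Bw; right; split => //; split => //; split => //.
rewrite /Ball in Bw; have := edist_tri w z y; lra.
Qed.

Lemma compact_closedA (K : pt n -> Prop) :
  tauL_compact A K -> euclL_closed (fun x => K x /\ A x).
Proof.
move=> [KL Kc]; split; first by move=> x [Kx _]; exact: KL.
move=> x Lx nC.
pose F := (fun y z => (z = y /\ ~ A y /\ Ln y) \/ (True /\ A y /\ Ln z /\ edist z y < edist y x / 2)).
have cov : forall z, K z -> exists y, F y z.
  move=> z Kz; exists z; rewrite /F.
  case: (classic (A z)) => Az; last by left; split => //; split => //; exact: KL.
  right; split => //; split => //; split; first exact: KL.
  rewrite edist_refl.
  have zx : z <> x by move=> e; apply: nC; rewrite -e.
  have := edist_pos z x zx; lra.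
have [s hs] := Kc (pt n) F (fun y => cover_set_open True y _) cov.
have [e [e0 he]] := list_min _ s (fun y => edist y x / 2).
exists e; split => // w Lw Bw [Kw Aw].
have [y [ys [[wy [nAy _]]|[_ [Ay [_ hwy]]]]]] := hs w Kw.
  by apply: nAy; rewrite -wy.
have dpos : 0 < edist y x / 2 by have := edist_ge0 w y; lra.
have := he y ys dpos.
have := edist_tri y w x; rewrite (edist_sym y w); rewrite /Ball in Bw; lra.
Qed.

End Dir1.

Lemma dir1 n (A : pt n -> Prop) (hA : forall x, A x -> Ln x) :
  tauL_sigma_compact A -> euclL_Fsigma A /\ countable_set (fun x : pt n => Ln x /\ ~ A x).
Proof.
move=> [K [Kc KL]]; split.
  exists (fun k x => K k x /\ A x); split.
    move=> k; exact: (compact_closedA n A (K k) (Kc k)).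
  move=> x; split; last by case=> k [].
  by move=> Ax; have [k Kx] := (KL x).1 (hA x Ax); exists k.
pose G k m (y z : pt n) := (z = y /\ ~ A y /\ Ln y) \/
   (K k y /\ A y /\ Ln z /\ edist z y < / INR (S m)).
have hs : forall k m, exists s : list (pt n), forall z, K k z -> exists y, In y s /\ G k m y z.
  move=> k m; apply: ((Kc k).2 (pt n) (G k m) (fun y => cover_set_open n A (K k y) y _)).
  move=> z Kz; exists z; rewrite /G.
  case: (classic (A z)) => Az; last by left; split => //; split => //; exact: (Kc k).1.
  right; split => //; split => //; split; first exact: (Kc k).1.
  rewrite edist_refl; apply: Rinv_0_lt_compat; apply: lt_0_INR; lia.
pose s k m := proj1_sig (boolp.cid (hs k m)).
have sP k m : forall z, K k z -> exists y, In y (s k m) /\ G k m y z :=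
  proj2_sig (boolp.cid (hs k m)).
exists (fun N => match (unpickle N : option (nat * nat * nat)) with
                 | Some (k, m, j) => nth_error (s k m) j | None => None end).
move=> x [Lx nAx].
have [k Kx] := (KL x).1 Lx.
have [_ clo] := compact_closedA n A (K k) (Kc k).
have [e [e0 he]] := clo x Lx (fun h => nAx h.2).
have [N [hN N0]] := archimed_cor1 e e0.
have [y [ys [[xy _]|[Ky [Ay [_ hxy]]]]]] := sP k N.-1 x Kx.
  have [j hj] := In_nth_error _ _ (eq_ind _ (fun t => In t _) ys _ (esym xy)).
  by exists (pickle (k, N.-1, j)); rewrite pickleK.
exfalso; apply: (he y (hA y Ay)); last by split.
rewrite /Ball edist_sym.
have eN : S N.-1 = N by lia.
rewrite eN in hxy; lra.
Qed.


Section Dir2.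
Variable n : nat.
Variable A : pt n -> Prop.

Lemma compact_sub1 (S : pt n -> Prop) : (forall x, S x -> Ln x) ->
  (forall x y, S x -> S y -> x = y) -> tauL_compact A S.
Proof.
move=> SL Su; split => // I F _ cov.
case: (classic (exists x, S x)) => [[x Sx]|nS].
  have [i Fi] := cov x Sx.
  by exists (i :: nil) => y Sy; exists i; split; [left | rewrite (Su y x Sy Sx)].
by exists nil => y Sy; exfalso; apply: nS; exists y.
Qed.

Lemma compact_union (K1 K2 : pt n -> Prop) : tauL_compact A K1 -> tauL_compact A K2 ->
  tauL_compact A (fun x => K1 x \/ K2 x).
Proof.
move=> [L1 c1] [L2 c2]; split; first by move=> x [/L1|/L2].
move=> I F Fo cov.
have [s1 h1] := c1 I F Fo (fun x h => cov x (or_introl h)).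
have [s2 h2] := c2 I F Fo (fun x h => cov x (or_intror h)).
exists (s1 ++ s2) => x [/h1|/h2] [i [si Fi]]; exists i; split => //;
  apply: in_or_app; [left | right] => //.
Qed.

Lemma compact_box (C : pt n -> Prop) (N : R) : euclL_closed C -> (forall x, C x -> A x) ->
  tauL_compact A (fun x => C x /\ Ln x /\ forall t, Rabs (x.1 t) <= N).
Proof.
move=> hC CA; split; first by move=> x [_ [Lx _]].
move=> I F Fo cov.
have := HBmod.HB (n.-1) N (fun u => C (u, 0) /\ forall t, Rabs (u t) <= N) I (fun i u => F i (u, 0)).
case.
- by move=> v [_ hv].
- move=> v nS.
  case: (classic (C (v, 0))) => Cv.
    have [t ht] : exists t, ~ Rabs (v t) <= N.
      apply: not_all_ex_not => hb; exact: nS.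
    exists (Rabs (v t) - N); split; first lra.
    move=> u hu [_ hb]; have := hu t; have := hb t.
    have := Rabs_triang_inv (v t) (u t); rewrite Rabs_minus_sym; lra.
  have [e [e0 he]] := hC.2 (v, 0) (erefl _) Cv.
  have [d [d0 hd]] := box_ball n e e0.
  exists d; split => // u hu [Cu _].
  apply: (he (u, 0) (erefl _)) Cu.
  exact: (hd (u, 0) (v, 0) (erefl _) hu).
- move=> v [Cv hb].
  have [i Fi] := cov (v, 0) (conj Cv (conj (erefl _) hb)).
  have [e [e0 he]] := open_nbhdA n A (F i) (v, 0) (Fo i) Fi (CA _ Cv).
  have [d [d0 hd]] := box_ball n e e0.
  exists i, d; split => // u hu.
  exact: (he (u, 0) (erefl _) (hd (u, 0) (v, 0) (erefl _) hu)).
move=> s hs; exists s => -[u z] [Cx [Lx bx]].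
rewrite /Ln /= in Lx; subst z.
exact: hs.
Qed.

End Dir2.

Lemma dir2 n (A : pt n -> Prop) (hA : forall x, A x -> Ln x) :
  euclL_Fsigma A -> countable_set (fun x : pt n => Ln x /\ ~ A x) -> tauL_sigma_compact A.
Proof.
move=> [C [hC hAC]] [f hf].
exists (fun j x => match (unpickle j : option (nat * nat * nat)) with
   | Some (k, N, i) => (C k x /\ Ln x /\ forall t, Rabs (x.1 t) <= INR N) \/ (f i = Some x /\ Ln x)
   | None => False end); split.
  move=> j; case: (unpickle j : option (nat * nat * nat)) => [[[k N] i]|].
    apply: compact_union.
      apply: compact_box; first exact: hC.
      by move=> x Cx; apply/hAC; exists k.
    apply: compact_sub1; first by move=> x [].
    by move=> x y [-> _] [[->] _].
  by apply: compact_sub1.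
move=> x; split; last first.
  move=> [j]; case: (unpickle j : option (nat * nat * nat)) => [[[k N] i]|] //.
  by case=> [[_ [Lx _]]|[_ Lx]].
move=> Lx; case: (classic (A x)) => Ax.
  have [k Ck] := (hAC x).1 Ax.
  have [N hN] := INR_archimed 1 (edist x ((fun _ => 0), 0)) Rlt_0_1.
  exists (pickle (k, N, 0%N)); rewrite pickleK; left; split => //; split => // t.
  have := edist_coord x ((fun _ => 0), 0) t; rewrite /= Rminus_0_r; lra.
have [i hi] := hf x (conj Lx Ax).
by exists (pickle (0%N, 0%N, i)); rewrite pickleK; right.
Qed.

Theorem mainTheorem12 (n : nat) (hn : (2 <= n)%N) (A : pt n -> Prop)
  (hA : forall x, A x -> Ln x) :
  tauL_sigma_compact A <->
  (euclL_Fsigma A /\ countable_set (fun x : pt n => Ln x /\ ~ A x)).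
Proof.
split; first exact: dir1.
by case=> h1 h2; exact: dir2.
Qed.
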